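(* Let $p,q\ge1$, $u\in\mathfrak{S}_p$, $v\in\mathfrak{S}_q$. For $w\in\mathfrak{S}_{p+q}$ let $A^w_{u,v}$ be the set of $\zeta\in\mathfrak{S}^{(p,q)}$ such that (i) $(u\times v)\cdot\zeta^{-1}\le w$, and (ii) whenever $u'\in\mathfrak{S}_p$, $v'\in\mathfrak{S}_q$ satisfy $u\le u'$, $v\le v'$ and $(u'\times v')\cdot\zeta^{-1}\le w$, then $u'=u$ and $v'=v$. Let $\alpha^w_{u,v}=\#A^w_{u,v}$. Then $$\mathcal{M}_u\cdot\mathcal{M}_v=\sum_{w\in\mathfrak{S}_{p+q}}\alpha^w_{u,v}\,\mathcal{M}_w .$$
   Context: Permutations in one-line notation, product is composition. For $u\in\mathfrak{S}_p,v\in\mathfrak{S}_q$, $u\times v\in\mathfrak{S}_{p+q}$ has $(u\times v)(i)=u_i$ ($i\le p$), $(u\times v)(p+j)=p+v_j$. $\mathfrak{S}^{(p,q)}=\{\zeta\in\mathfrak{S}_{p+q}:\zeta_1<\cdots<\zeta_p,\zeta_{p+1}<\cdots<\zeta_{p+q}\}$. $\mathrm{st}(a_1,\ldots,a_m)\in\mathfrak{S}_m$ is the permutation with the same relative order as the distinct integers $a_i$. $\mathfrak{S}Sym$ is the graded Hopf algebra over $\mathbb{Q}$ with basis $\{\mathcal{F}_u:u\in\mathfrak{S}_n,n\ge0\}$, product $\mathcal{F}_u\cdot\mathcal{F}_v=\sum_{\zeta\in\mathfrak{S}^{(p,q)}}\mathcal{F}_{(u\times v)\cdot\zeta^{-1}}$,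 coproduct $\Delta(\mathcal{F}_u)=\sum_{p=0}^n\mathcal{F}_{\mathrm{st}(u_1..u_p)}\otimes\mathcal{F}_{\mathrm{st}(u_{p+1}..u_n)}$. Weak order: $u\le v$ iff $\mathrm{Inv}(u)\subseteq\mathrm{Inv}(v)$, $\mathrm{Inv}(u)=\{(i,j):i<j,u_i>u_j\}$, Möbius function $\mu$. Monomial basis: $\mathcal{M}_u=\sum_{v\ge u}\mu(u,v)\mathcal{F}_v$, equivalently $\mathcal{F}_u=\sum_{v\ge u}\mathcal{M}_v$. *)

(* Defs.v *)
From mathcomp Require Import all_boot all_order all_fingroup all_algebra.
Set Implicit Arguments. Unset Strict Implicit. Unset Printing Implicit Defensive.
Import GRing.Theory.
Local Open Scope ring_scope.

(* Permutations of {0,..,n-1}; one-line notation u_i = u i (0-indexed). *)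

(* Composition product: (pcomp u v) i = u (v i).  MathComp's ( * )%g on
   perms is left-to-right, hence the swap. *)
Definition pcomp n (u v : 'S_n) : 'S_n := (v * u)%g.

Lemma pcompE n (u v : 'S_n) i : pcomp u v i = u (v i).
Proof. by rewrite /pcomp permM. Qed.

Definition cross_fun p q (u : 'S_p) (v : 'S_q) (i : 'I_(p + q)) : 'I_(p + q) :=
  match split i with
  | inl j => lshift q (u j)
  | inr k => rshift p (v k)
  end.

Lemma cross_fun_inj p q (u : 'S_p) (v : 'S_q) : injective (cross_fun u v).
Proof.
move=> i i'; rewrite /cross_fun -[i]splitK -[i']splitK !unsplitK.
case: (split i) => [j|k]; case: (split i') => [j'|k'] /= /(congr1 val) /= E.
- by congr (unsplit (inl _)); apply: (@perm_inj _ u); apply: val_inj.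
- by have := ltn_ord (u j); rewrite E -{2}(addn0 p) ltn_add2l.
- by have := ltn_ord (u j'); rewrite -E -{2}(addn0 p) ltn_add2l.
- congr (unsplit (inr _)); apply: (@perm_inj _ v); apply: val_inj.
  by move/eqP: E; rewrite eqn_add2l => /eqP.
Qed.

Definition cross p q (u : 'S_p) (v : 'S_q) : 'S_(p + q) := perm (@cross_fun_inj p q u v).

Definition shuffle p q (z : 'S_(p + q)) : bool :=
  [forall i : 'I_p, forall j : 'I_p, (i < j)%N ==> (z (lshift q i) < z (lshift q j))%N]
  && [forall i : 'I_q, forall j : 'I_q, (i < j)%N ==> (z (rshift p i) < z (rshift p j))%N].

Definition Inv n (u : 'S_n) : {set 'I_n * 'I_n} :=
  [set ij : 'I_n * 'I_n | (ij.1 < ij.2)%N && (u ij.2 < u ij.1)%N].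

Definition leW n (u v : 'S_n) : bool := Inv u \subset Inv v.

(* The fuel #|Inv v| suffices since w < v implies #|Inv w| < #|Inv v|. *)
Fixpoint mu_rec n (k : nat) (u v : 'S_n) : rat :=
  if u == v then 1
  else if leW u v then
    match k with
    | 0 => 0
    | k'.+1 => - \sum_(w : 'S_n | leW u w && leW w v && (w != v)) mu_rec k' u w
    end
  else 0.

Definition mu n (u v : 'S_n) : rat := mu_rec #|Inv v| u v.

(* Homogeneous component of degree n of SSym over Q: coefficient vectors
   on the fundamental basis F_w, w in S_n. *)
Definition SSymn n := {ffun 'S_n -> rat}.

Definition sc n (c : rat) (a : SSymn n) : SSymn n := [ffun w => c * a w].

Definition F n (u : 'S_n) : SSymn n := [ffun w => (w == u)%:R].

Definition mulF p q (a : SSymn p) (b : SSymn q) : SSymn (p + q) :=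
  \sum_(u : 'S_p) \sum_(v : 'S_q)
     sc (a u * b v) (\sum_(z : 'S_(p + q) | shuffle z) F (pcomp (cross u v) z^-1%g)).

Definition M n (u : 'S_n) : SSymn n := \sum_(v : 'S_n | leW u v) sc (mu u v) (F v).

Definition Aset p q (u : 'S_p) (v : 'S_q) (w : 'S_(p + q)) : {set 'S_(p + q)} :=
  [set z | shuffle z
     && leW (pcomp (cross u v) z^-1%g) w
     && [forall u' : 'S_p, forall v' : 'S_q,
           (leW u u' && leW v v' && leW (pcomp (cross u' v') z^-1%g) w)
             ==> ((u' == u) && (v' == v))]].

Definition alpha p q (u : 'S_p) (v : 'S_q) (w : 'S_(p + q)) : nat := #|Aset u v w|.

(* Main.v *)
Require Import Defs.
From mathcomp Require Import all_boot all_order all_fingroup all_algebra.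
Set Implicit Arguments. Unset Strict Implicit. Unset Printing Implicit Defensive.
Import GRing.Theory.
From mathcomp Require Import ring.
Local Open Scope ring_scope.

Lemma leWP n (x w : 'S_n) :
  reflect (forall i j : 'I_n, (i < j)%N -> (x j < x i)%N -> (w j < w i)%N) (leW x w).
Proof.
apply: (iffP subsetP) => H.
- move=> i j ij xji; have := H (i, j); rewrite !inE /= ij xji => /(_ isT).
  by case/andP.
- move=> [i j]; rewrite !inE /= => /andP[ij xji]; rewrite ij /=; exact: H.
Qed.

Lemma leW_refl n (x : 'S_n) : leW x x.
Proof. exact: subxx. Qed.

Lemma leW_trans n (x y z : 'S_n) : leW x y -> leW y z -> leW x z.
Proof. exact: subset_trans. Qed.

Lemma card_ltord n m (h : (m <= n)%N) : #|[set k : 'I_n | (k < m)%N]| = m.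
Proof.
have -> : [set k : 'I_n | (k < m)%N] = [set widen_ord h k | k in 'I_m].
  apply/setP => k; rewrite inE; apply/idP/imsetP.
  - by move=> km; exists (Ordinal km) => //; apply: val_inj.
  - by case=> j _ ->; rewrite /= ltn_ord.
rewrite card_imset ?card_ord //; by move=> a b /(congr1 val) /= /val_inj.
Qed.

Lemma rank_perm n (u : 'S_n) i : #|[set j | (u j < u i)%N]| = u i.
Proof.
have -> : [set j | (u j < u i)%N] = u @^-1: [set k : 'I_n | (k < u i)%N].
  by apply/setP => j; rewrite !inE.
rewrite card_preimset; last exact: perm_inj.
by apply: card_ltord; apply: ltnW; apply: ltn_ord.
Qed.

Lemma Inv_inj n : injective (@Inv n).
Proof.
move=> u v E; apply/permP => i; apply: val_inj => /=.
rewrite -rank_perm -(rank_perm v); apply: eq_card => j; rewrite !inE.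
have key : forall a b : 'I_n, (a < b)%N -> (u b < u a)%N = (v b < v a)%N.
  move=> a b ab; have := congr1 (fun S : {set 'I_n * 'I_n} => (a, b) \in S) E.
  by rewrite /= !inE /= ab.
case: (ltngtP j i) => h.
- have hlp : forall a b : nat, a != b -> (a < b)%N = ~~ (b < a)%N.
    by move=> a b; case: ltngtP.
  have nu : (u j != u i :> nat) by apply/eqP => /val_inj/perm_inj e; move: h; rewrite e ltnn.
  have nv : (v j != v i :> nat) by apply/eqP => /val_inj/perm_inj e; move: h; rewrite e ltnn.
  by rewrite (hlp _ _ nu) (hlp _ _ nv) (key j i h).
- exact: (key i j h).
- by move: h => /val_inj ->; rewrite !ltnn.
Qed.

Lemma leW_anti n (x y : 'S_n) : leW x y -> leW y x -> x = y.
Proof. by move=> a b; apply: Inv_inj; apply/eqP; rewrite eqEsubset; apply/andP. Qed.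

Lemma leW_lt_card n (x y : 'S_n) : leW x y -> x != y -> (#|Inv x| < #|Inv y|)%N.
Proof.
move=> xy nxy; apply: proper_card; rewrite properEneq; apply/andP; split=> //.
by apply: contra nxy => /eqP /Inv_inj ->.
Qed.

Lemma mu_rec_fuel n (u : 'S_n) k1 k2 (x : 'S_n) :
  (#|Inv x| <= k1)%N -> (#|Inv x| <= k2)%N -> mu_rec k1 u x = mu_rec k2 u x.
Proof.
elim: k1 k2 x => [|k1 IH] [|k2] x h1 h2 //=.
- case: eqVneq => // ux; case: ifP => // le.
  by have := leW_lt_card le ux; rewrite ltnNge (leq_trans h1).
- case: eqVneq => // ux; case: ifP => // le.
  by have := leW_lt_card le ux; rewrite ltnNge (leq_trans h2).
- case: eqVneq => // ux; case: ifP => // le; congr (- _).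
  apply: eq_bigr => y /andP[/andP[uy yx] nyx].
  have lt := leW_lt_card yx nyx.
  by apply: IH; rewrite -ltnS (leq_trans lt).
Qed.

Lemma mu_fuel n (u x : 'S_n) k : (#|Inv x| <= k)%N -> mu_rec k u x = mu u x.
Proof. by move=> h; apply: mu_rec_fuel. Qed.

Lemma mu_refl n (u : 'S_n) : mu u u = 1.
Proof. by rewrite /mu; case: (#|Inv u|) => [|k] /=; rewrite eqxx. Qed.

Lemma mobius n (u y : 'S_n) :
  \sum_(x | leW u x && leW x y) mu u x = (u == y)%:R.
Proof.
case: (boolP (leW u y)) => uy; last first.
  rewrite big1; last by move=> x /andP[ux xy]; rewrite (leW_trans ux xy) in uy.
  by case: eqVneq uy => // ->; rewrite leW_refl.
case: eqVneq => [<-|neq].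
  rewrite (big_pred1 u) ?mu_refl // => x /=.
  apply/andP/eqP => [[a b]|->]; [exact: leW_anti | by rewrite leW_refl].
rewrite (bigD1 y) /=; last by rewrite uy leW_refl.
rewrite /mu; case E: #|Inv y| => [|k].
  by have := leW_lt_card uy neq; rewrite E.
rewrite /= (negbTE neq) uy.
rewrite (eq_bigr (fun x => mu u x)); first by rewrite addNr.
move=> x /andP[/andP[ux xy] nxy]; apply: mu_fuel.
by have := leW_lt_card xy nxy; rewrite E ltnS.
Qed.

Lemma zeta_inj n (a b : SSymn n) :
  (forall w, \sum_(x | leW x w) a x = \sum_(x | leW x w) b x) -> a = b.
Proof.
move=> H; apply/ffunP.
suff key : forall k w, (#|Inv w| < k)%N -> a w = b w by move=> w; apply: (key _ w).
elim=> [//|k IH] w hw.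
have := H w; rewrite (bigD1 w) ?leW_refl //= [in RHS](bigD1 w) ?leW_refl //=.
rewrite (eq_bigr (fun x => b x)); first by move/addIr.
move=> x /andP[xw nxw]; apply: IH.
by rewrite (leq_trans (leW_lt_card xw nxw)).
Qed.

Definition rk n (f : 'I_n -> nat) (i : 'I_n) := #|[set j | (f j < f i)%N]|.

Lemma rk_lt n (f : 'I_n -> nat) i : (rk f i < n)%N.
Proof.
have : [set j | (f j < f i)%N] \proper [set: 'I_n].
  by rewrite properT; apply/eqP => /setP/(_ i); rewrite !inE ltnn.
by move/proper_card; rewrite cardsT card_ord.
Qed.

Lemma rk_mono n (f : 'I_n -> nat) i j : (f i < f j)%N -> (rk f i < rk f j)%N.
Proof.
move=> h; apply: proper_card; apply/properP; split.
  by apply/subsetP => k; rewrite !inE => /ltn_trans; apply.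
by exists i; rewrite !inE ?h // ltnn.
Qed.

Lemma rk_ltE n (f : 'I_n -> nat) (finj : injective f) i j :
  (rk f i < rk f j)%N = (f i < f j)%N.
Proof.
case: (ltngtP (f i) (f j)) => h; first exact: rk_mono.
- by apply/negbTE; rewrite -leqNgt ltnW // rk_mono.
- by rewrite (finj _ _ h) ltnn.
Qed.

Lemma st_inj n (f : 'I_n -> nat) (finj : injective f) :
  injective (fun i => Ordinal (rk_lt f i)).
Proof.
move=> i j /(congr1 val) /= e.
case: (ltngtP (f i) (f j)) => h; last exact: finj.
- by have := rk_mono h; rewrite e ltnn.
- by have := rk_mono h; rewrite e ltnn.
Qed.

Definition st n (f : 'I_n -> nat) (finj : injective f) : 'S_n := perm (st_inj finj).

Lemma stE n (f : 'I_n -> nat) (finj : injective f) i j :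
  (st finj i < st finj j)%N = (f i < f j)%N.
Proof. by rewrite /st !permE /= rk_ltE. Qed.

Section Shuf.
Variables p q : nat.

Lemma f1_inj (w z : 'S_(p + q)) : injective (fun k : 'I_p => val (w (z (lshift q k)))).
Proof. by move=> a b /val_inj/perm_inj/perm_inj/lshift_inj. Qed.
Lemma f2_inj (w z : 'S_(p + q)) : injective (fun k : 'I_q => val (w (z (rshift p k)))).
Proof. by move=> a b /val_inj/perm_inj/perm_inj/rshift_inj. Qed.

Definition w1 (w z : 'S_(p + q)) : 'S_p := st (@f1_inj w z).
Definition w2 (w z : 'S_(p + q)) : 'S_q := st (@f2_inj w z).

Definition Cond (w z : 'S_(p + q)) : bool :=
  [forall a : 'I_q, forall b : 'I_p, (z (rshift p a) < z (lshift q b))%N ==>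
      (w (z (lshift q b)) < w (z (rshift p a)))%N].

Lemma crossEl (u : 'S_p) (v : 'S_q) i : cross u v (lshift q i) = lshift q (u i).
Proof.
rewrite /cross permE /cross_fun.
by have -> : split (lshift q i) = inl i by exact: (unsplitK (inl i : 'I_p + 'I_q)).
Qed.

Lemma crossEr (u : 'S_p) (v : 'S_q) i : cross u v (rshift p i) = rshift p (v i).
Proof.
rewrite /cross permE /cross_fun.
by have -> : split (rshift p i) = inr i by exact: (unsplitK (inr i : 'I_p + 'I_q)).
Qed.

Lemma shufl (z : 'S_(p + q)) : shuffle z -> forall i j,
  (z (lshift q i) < z (lshift q j))%N = (i < j)%N.
Proof.
case/andP => /forallP H1 _ i j.
have mono : forall i j : 'I_p, (i < j)%N -> (z (lshift q i) < z (lshift q j))%N.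
  by move=> a b; apply/implyP; apply: (forallP (H1 a)).
case: (ltngtP i j) => h; first exact: mono.
- by apply/negbTE; rewrite -leqNgt ltnW // mono.
- by rewrite (val_inj h) ltnn.
Qed.

Lemma shufr (z : 'S_(p + q)) : shuffle z -> forall i j,
  (z (rshift p i) < z (rshift p j))%N = (i < j)%N.
Proof.
case/andP => _ /forallP H1 i j.
have mono : forall i j : 'I_q, (i < j)%N -> (z (rshift p i) < z (rshift p j))%N.
  by move=> a b; apply/implyP; apply: (forallP (H1 a)).
case: (ltngtP i j) => h; first exact: mono.
- by apply/negbTE; rewrite -leqNgt ltnW // mono.
- by rewrite (val_inj h) ltnn.
Qed.

Lemma keyW (u' : 'S_p) (v' : 'S_q) (w z : 'S_(p + q)) : shuffle z ->
  leW (Defs.pcomp (cross u' v') z^-1%g) w = [&& leW u' (w1 w z), leW v' (w2 w z) & Cond w z].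
Proof.
move=> sh; set phi := Defs.pcomp _ _.
have phiE : forall x, phi (z x) = cross u' v' x by move=> x; rewrite /phi pcompE permK.
have H : reflect (forall a b, (z a < z b)%N -> (phi (z b) < phi (z a))%N ->
                     (w (z b) < w (z a))%N) (leW phi w).
  apply: (iffP (leWP _ _)) => [H a b|H i j ij]; first exact: H.
  by have := H (z^-1%g i) (z^-1%g j); rewrite !permKV; apply.
apply/idP/idP.
- move/H => {}H; apply/and3P; split.
  + apply/leWP => i j ij uji; rewrite /w1 stE; apply: H; first by rewrite shufl.
    by rewrite !phiE !crossEl.
  + apply/leWP => i j ij uji; rewrite /w2 stE; apply: H; first by rewrite shufr.
    by rewrite !phiE !crossEr /= ltn_add2l.
  + apply/forallP => a; apply/forallP => b; apply/implyP => zab; apply: H => //.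
    rewrite !phiE crossEl crossEr /=.
    by rewrite (leq_trans (ltn_ord _)) // leq_addr.
- case/and3P => /leWP A /leWP B /forallP C; apply/H => a b.
  rewrite -[a]splitK -[b]splitK.
  case: (split a) => [a1|a2]; case: (split b) => [b1|b2] /= zab;
    rewrite !phiE ?crossEl ?crossEr /= => hlt.
  + have ab : (a1 < b1)%N by rewrite -(shufl sh).
    by have := A _ _ ab hlt; rewrite /w1 stE.
  + by move: hlt; rewrite ltnNge (leq_trans (ltnW (ltn_ord _)) (leq_addr _ _)).
  + exact: (implyP (forallP (C a2) b1) zab).
  + have ab : (a2 < b2)%N by rewrite -(shufr sh).
    by move: hlt; rewrite ltn_add2l => hlt; have := B _ _ ab hlt; rewrite /w2 stE.
Qed.

Lemma AsetE (u : 'S_p) (v : 'S_q) (w z : 'S_(p + q)) :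
  (z \in Aset u v w) = shuffle z && [&& Cond w z, u == w1 w z & v == w2 w z].
Proof.
rewrite inE; case sh: (shuffle z) => //=; rewrite keyW //.
apply/idP/idP.
- case/andP => /and3P[uw vw c] /forallP F.
  move: (F (w1 w z)) => /forallP/(_ (w2 w z))/implyP.
  rewrite uw vw keyW // !leW_refl c /= => /(_ isT)/andP[/eqP-> /eqP->].
  by rewrite !eqxx.
- case/and3P => c /eqP eu /eqP ev.
  apply/andP; split; first by rewrite -eu -ev !leW_refl c.
  apply/forallP => u'; apply/forallP => v'; apply/implyP; rewrite keyW // -eu -ev.
  case/andP => /andP[uu vv] /and3P[uu' vv' _].
  by rewrite (leW_anti uu uu') (leW_anti vv vv') !eqxx.
Qed.

End Shuf.

Lemma scE n c (a : SSymn n) x : sc c a x = c * a x.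
Proof. by rewrite ffunE. Qed.

Lemma FE n (u x : 'S_n) : F u x = (x == u)%:R.
Proof. by rewrite ffunE. Qed.

Lemma ME n (u x : 'S_n) : M u x = if leW u x then mu u x else 0.
Proof.
rewrite /M sum_ffunE; under eq_bigr do rewrite scE FE.
case: ifP => h.
  rewrite (bigD1 x) //= eqxx mulr1 big1 ?addr0 // => y /andP[_ nyx].
  by rewrite eq_sym (negbTE nyx) mulr0.
apply: big1 => y uy; case: eqVneq => [e|]; last by rewrite mulr0.
by move: h; rewrite e uy.
Qed.

Lemma sum_eq n (P : pred 'S_n) y : \sum_(x | P x) ((x == y)%:R : rat) = (P y)%:R.
Proof.
case: (boolP (P y)) => Py.
  rewrite (bigD1 y) //= eqxx big1 ?addr0 // => x /andP[_ /negbTE ->] //.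
apply: big1 => x Px; case: eqVneq => // e.
by move: Py; rewrite -e Px.
Qed.

Lemma mobius' n (u y : 'S_n) :
  \sum_x (if leW u x then mu u x else 0) * (leW x y)%:R = (u == y)%:R.
Proof.
rewrite -(mobius u y) [RHS]big_mkcond /=; apply: eq_bigr => x _.
by case: (leW u x); case: (leW x y); rewrite /= ?mulr1 ?mulr0 ?mul0r.
Qed.

Lemma card_sum (T : finType) (A : {set T}) : (#|A|%:R : rat) = \sum_z (z \in A)%:R.
Proof.
rewrite -sum1_card natr_sum big_mkcond /=; apply: eq_bigr => z _.
by case: (z \in A).
Qed.

Lemma factor p q (u A : 'S_p) (v B : 'S_q) (c : bool) :
  \sum_(u' : 'S_p) \sum_(v' : 'S_q) (M u u' * M v v') * ([&& leW u' A, leW v' B & c]%:R : rat)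
  = ([&& c, u == A & v == B])%:R.
Proof.
have -> : [&& c, u == A & v == B] = (u == A) && (v == B) && c.
  by case: c; case: (u == A); case: (v == B).
rewrite -!mulnb !natrM -(mobius' u A) -(mobius' v B) !mulr_suml.
apply: eq_bigr => u' _; rewrite mulr_sumr mulr_suml; apply: eq_bigr => v' _.
rewrite !ME -!mulnb !natrM; ring.
Qed.

Lemma zetaM n (w' y : 'S_n) : \sum_(x | leW x y) M w' x = (w' == y)%:R.
Proof.
under eq_bigr do rewrite ME.
rewrite -big_mkcondr -(mobius w' y); apply: eq_bigl => x; by rewrite andbC.
Qed.

Lemma mulF_eval p q (a : SSymn p) (b : SSymn q) x :
  mulF a b x = \sum_(u' : 'S_p) \sum_(v' : 'S_q) (a u' * b v') *
     \sum_(z | shuffle z) ((x == Defs.pcomp (cross u' v') z^-1%g)%:R : rat).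
Proof.
rewrite /mulF sum_ffunE; apply: eq_bigr => u' _; rewrite sum_ffunE.
apply: eq_bigr => v' _; rewrite scE sum_ffunE; congr (_ * _).
by apply: eq_bigr => z _; rewrite FE.
Qed.

Unset Implicit Arguments.
Theorem mainTheorem7 (p q : nat) (hp : (0 < p)%N) (hq : (0 < q)%N)
    (u : 'S_p) (v : 'S_q) :
  mulF (M u) (M v) = \sum_(w : 'S_(p + q)) sc (alpha u v w)%:R (M w).
Proof.
apply: zeta_inj => w.
transitivity (\sum_z ([&& shuffle z, Cond w z, u == w1 w z & v == w2 w z])%:R : rat).
  under eq_bigr do rewrite mulF_eval.
  rewrite exchange_big; under eq_bigr do rewrite exchange_big.
  under eq_bigr do under eq_bigr do rewrite -mulr_sumr exchange_big.
  transitivity (\sum_(u' : 'S_p) \sum_(v' : 'S_q) (M u u' * M v v') *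
     \sum_(z | shuffle z) ([&& leW u' (w1 w z), leW v' (w2 w z) & Cond w z]%:R : rat)).
    apply: eq_bigr => u' _; apply: eq_bigr => v' _; congr (_ * _).
    by apply: eq_bigr => z sh; rewrite sum_eq keyW.
  under eq_bigr do under eq_bigr do rewrite mulr_sumr.
  under eq_bigr do rewrite exchange_big.
  rewrite exchange_big big_mkcond [RHS]big_mkcond /=; apply: eq_bigr => z _.
  case: (shuffle z) => //=.
  by rewrite -factor.
transitivity ((alpha u v w)%:R : rat).
  by rewrite /alpha card_sum; apply: eq_bigr => z _; rewrite AsetE.
symmetry; under eq_bigr do rewrite sum_ffunE.
rewrite exchange_big /=.
under eq_bigr do rewrite (eq_bigr _ (fun x _ => scE _ _ _)) -mulr_sumr zetaM.
rewrite (bigD1 w) //= eqxx mulr1 big1 ?addr0 // => w' /negbTE ->.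
by rewrite mulr0.
Qed.
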